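(* Let $R_{n,d}$ be a $d$-regular simple graph on $n$ vertices. Then $m(R_{n,d})=\frac{n}{d+1}$.
   Context: For a simple graph $G$ with adjacency matrix $A$, $\mathrm{SOL}(G)$ is the set of $x\in\mathbb{R}^n$ with $x\geq 0$, $(A+I)x\geq\mathbf{e}$ and $x^\top((A+I)x-\mathbf{e})=0$ ($I$ identity, $\mathbf{e}$ all-ones), and $m(G):=\min\{\mathbf{e}^\top x\mid x\in\mathrm{SOL}(G)\}$. *)

(* Defs.v *)
From HB Require Import structures.
From mathcomp Require Import all_boot all_order all_algebra.
Set Implicit Arguments. Unset Strict Implicit. Unset Printing Implicit Defensive.
Import Order.TTheory GRing.Theory Num.Theory.
Local Open Scope ring_scope.

Definition simple_graph (n : nat) (e : rel 'I_n) : Prop :=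
  symmetric e /\ irreflexive e.

Definition regular (n d : nat) (e : rel 'I_n) : Prop :=
  forall i : 'I_n, #|[pred j | e i j]| = d.

Definition adjmx (R : nzRingType) (n : nat) (e : rel 'I_n) : 'M[R]_n :=
  \matrix_(i, j) (e i j)%:R.

Definition SOL (R : realFieldType) (n : nat) (e : rel 'I_n) (x : 'cV[R]_n) : Prop :=
  let M := adjmx R e + 1%:M in
  (forall i, 0 <= x i 0) /\
  (forall i, 1 <= (M *m x) i 0) /\
  (x^T *m (M *m x - const_mx 1)) 0 0 = 0.

Definition is_m (R : realFieldType) (n : nat) (e : rel 'I_n) (v : R) : Prop :=
  (exists2 x, SOL e x & \sum_i x i 0 = v) /\
  (forall x, SOL e x -> v <= \sum_i x i 0).

(* Main.v *)
Require Import Defs.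
From mathcomp Require Import all_boot all_order all_algebra.
Local Open Scope ring_scope.
Import Order.TTheory GRing.Theory Num.Theory.

Lemma rowsumM (R : realFieldType) (n d : nat) (e : rel 'I_n) (i : 'I_n) :
  regular d e -> \sum_j (adjmx R e + 1%:M) i j = (d.+1)%:R.
Proof.
move=> reg.
rewrite (eq_bigr (fun j => (e i j)%:R + (i == j)%:R)); last first.
  by move=> j _; rewrite !mxE.
rewrite big_split /= -!natr_sum.
have -> : (\sum_j (e i j : nat))%N = d.
  rewrite -(reg i) -sum1_card [RHS]big_mkcond /=. apply: eq_bigr => j _. by rewrite inE; case: (e i j).
rewrite (bigD1 i) //= eqxx big1 ?addn0 -?natrD ?addn1 //.
by move=> j /negbTE; rewrite eq_sym => ->.
Qed.

Lemma Mxc (R : realFieldType) (n d : nat) (e : rel 'I_n) :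
  regular d e -> forall k : 'I_n,
  ((adjmx R e + 1%:M) *m (const_mx ((d.+1)%:R^-1) : 'cV[R]_n)) k 0 = 1.
Proof.
move=> reg k; rewrite mxE.
rewrite (eq_bigr (fun j => (adjmx R e + 1%:M) k j * (d.+1)%:R^-1)).
  by rewrite -mulr_suml (@rowsumM R n d e k reg) mulfV // pnatr_eq0.
by move=> j _; rewrite [const_mx _ _ _]mxE.
Qed.

Theorem lemma5 (R : realFieldType) (n d : nat) (e : rel 'I_n) :
  simple_graph e -> regular d e ->
  is_m e (n%:R / (d.+1)%:R : R).
Proof.
move=> [sym irr] reg.
have d1 : (d.+1)%:R != 0 :> R by rewrite pnatr_eq0.
have colsum : forall j, \sum_i (adjmx R e + 1%:M) i j = (d.+1)%:R.
  move=> j; rewrite -(@rowsumM R n d e j reg); apply: eq_bigr => i _.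
  by rewrite !mxE sym eq_sym.
split.
  exists (const_mx ((d.+1)%:R^-1)).
    have Mx := @Mxc R n d e reg.
    split; first by move=> i; rewrite mxE invr_ge0 ler0n.
    split; first by move=> i; rewrite Mx.
    rewrite mxE big1 // => j _.
    by rewrite [X in _ * X]mxE Mx !mxE subrr mulr0.
  rewrite (eq_bigr (fun _ => (d.+1)%:R^-1)); last by move=> i _; rewrite mxE.
  by rewrite sumr_const card_ord mulr_natl.
move=> x [_ [ge1 _]].
rewrite ler_pdivrMr ?ltr0n //.
have : \sum_(i < n) (1 : R) <= \sum_(i < n) ((adjmx R e + 1%:M) *m x) i 0.
  by apply: ler_sum => i _; apply: ge1.
rewrite sumr_const card_ord => H; apply: (le_trans H).
rewrite (eq_bigr (fun i => \sum_j (adjmx R e + 1%:M) i j * x j 0)); last first.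
  by move=> i _; rewrite mxE.
rewrite exchange_big /= mulr_suml le_eqVlt; apply/orP; left; apply/eqP.
apply: eq_bigr => j _; rewrite -mulr_suml colsum mulrC.
by [].
Qed.
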